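(* Let $r, a \in \mathbb{N}$ and $b, d \in \mathbb{Z}$ with $a \mid \mathrm{lcm}(b,d)$. Then for any completely multiplicative functions $f_1,\ldots,f_r:\mathbb{N}\to\mathbb{S}^1$, $$\liminf_{n\to\infty} \max_{1\le j\le r} |f_j(an+b)-f_j(an+d)| = 0.$$
   Context: $\mathbb{N}=\{1,2,\dots\}$, $\mathbb{S}^1$ the unit circle in $\mathbb{C}$; completely multiplicative means $f(mn)=f(m)f(n)$ for all $m,n\in\mathbb{N}$. Convention: $\mathrm{lcm}(b,0)=0$. *)

(* Defs.v *)
From Stdlib Require Import Reals ZArith List.
From Coquelicot Require Import Coquelicot.
Open Scope R_scope.

(* A function f : nat -> C is regarded as a function on N = {1,2,...};
   its value at 0 is irrelevant. *)

Definition circle_valued (f : nat -> C) : Prop :=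
  forall n : nat, (1 <= n)%nat -> Cmod (f n) = 1.

Definition completely_multiplicative (f : nat -> C) : Prop :=
  forall m n : nat, (1 <= m)%nat -> (1 <= n)%nat -> f (m * n)%nat = (f m * f n)%C.

(* max_{0 <= j < r} g j (the functions are indexed by j = 0..r-1 instead of 1..r). *)
Definition max_upto (r : nat) (g : nat -> R) : R :=
  fold_right Rmax 0 (map g (seq 0 r)).

(* the natural number a*n + b (meaningful once a*n + b >= 1, i.e. for all large n). *)
Definition lin_arg (a n : nat) (b : Z) : nat :=
  Z.to_nat (Z.of_nat a * Z.of_nat n + b)%Z.

(* Main.v *)
Require Import Defs.
From Stdlib Require Import Reals ZArith List.
From Coquelicot Require Import Coquelicot.
From Stdlib Require Import Znumtheory Lia Lra Classical.
Open Scope R_scope.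

Open Scope Z_scope.
Open Scope Z_scope.

Lemma mul_divide_mono (a b c d : Z) : (a | b) -> (c | d) -> (a * c | b * d).
Proof. intros [x ->] [y ->]. exists (x * y). ring. Qed.

Lemma rp_pow (x w : Z) (k : nat) : rel_prime x w -> rel_prime x (w ^ Z.of_nat k).
Proof.
  intros H. induction k as [|k IH].
  - simpl. apply rel_prime_sym, rel_prime_1.
  - rewrite Nat2Z.inj_succ, Z.pow_succ_r by lia.
    apply rel_prime_mult; auto.
Qed.

Lemma split_wrt (w : Z) : 0 < w -> forall n x, 0 < x -> (Z.to_nat x <= n)%nat ->
  exists x1 x2 k, x = x1 * x2 /\ 0 < x1 /\ 0 < x2 /\ rel_prime x1 w /\ (x2 | w ^ Z.of_nat k).
Proof.
  intros Hw. induction n as [|n IH]; intros x Hx Hn.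
  - lia.
  - destruct (Z.eq_dec (Z.gcd x w) 1) as [E|E].
    + exists x, 1, 0%nat. split; [lia|split; [lia|split;[lia|split]]].
      * apply Zgcd_1_rel_prime; auto.
      * apply Z.divide_1_l.
    + set (g := Z.gcd x w).
      assert (Hg0 : 0 <= g) by apply Z.gcd_nonneg.
      assert (Hgx : (g | x)) by apply Z.gcd_divide_l.
      assert (Hgw : (g | w)) by apply Z.gcd_divide_r.
      destruct Hgx as [x' Hx'].
      assert (g <> 0) by (intro Z0; rewrite Z0 in Hx'; lia).
      assert (1 < g) by (unfold g in *; lia).
      assert (0 < x') by nia.
      destruct (IH x') as (x1 & x2 & k & E1 & P1 & P2 & R1 & D1); [lia| |].
      { assert (x' < x) by nia. lia. }
      exists x1, (g * x2), (S k). split; [nia|split; [lia|split;[nia|split; auto]]].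
      rewrite Nat2Z.inj_succ, Z.pow_succ_r by lia.
      apply mul_divide_mono; auto.
Qed.

Lemma split_wrt' (w x : Z) : 0 < w -> 0 < x ->
  exists x1 x2 k, x = x1 * x2 /\ 0 < x1 /\ 0 < x2 /\ rel_prime x1 w /\ (x2 | w ^ Z.of_nat k).
Proof. intros. eapply split_wrt; eauto. Qed.

Lemma coprime_mul_div (a1 a2 x : Z) : rel_prime a1 a2 -> (a1 | x) -> (a2 | x) -> (a1 * a2 | x).
Proof.
  intros R [q Hq] H2. subst x.
  assert (a2 | q).
  { apply Z.gauss with a1. rewrite Z.mul_comm; auto.
    apply Zgcd_1_rel_prime. apply rel_prime_sym; auto. }
  destruct H as [q' ->]. exists q'. ring.
Qed.

Lemma arith (a b d N X : Z) : 0 < a -> 0 < N -> (a | Z.lcm b d) ->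
  exists s, X <= s /\ (N | s * (s + 1)) /\ (a | (d - b) * s - b).
Proof.
  intros Ha HN Hdiv.
  set (g := Z.gcd a b).
  assert (Hgpos : 0 < g).
  { assert (0 <= g) by apply Z.gcd_nonneg.
    assert (g <> 0). { intro Z0. apply Z.gcd_eq_0 in Z0. lia. } lia. }
  assert (Hga : (g | a)) by apply Z.gcd_divide_l.
  assert (Hgb : (g | b)) by apply Z.gcd_divide_r.
  destruct Hga as [w Hw].
  destruct Hgb as [b' Hb'].
  assert (Hwpos : 0 < w) by nia.
  assert (Hwb : rel_prime w b').
  { apply Zgcd_1_rel_prime.
    assert (E := Z.gcd_div_gcd a b g ltac:(lia) eq_refl).
    replace (a / g) with w in E by (rewrite Hw; rewrite Z.div_mul; lia).
    replace (b / g) with b' in E by (rewrite Hb'; rewrite Z.div_mul; lia).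
    exact E. }
  destruct (split_wrt' w a Hwpos Ha) as (a1 & a2 & k & Ea & Pa1 & Pa2 & Ra1 & Da2).
  destruct (split_wrt' w N Hwpos HN) as (N1 & N2 & k' & EN & PN1 & PN2 & RN1 & DN2).
  assert (Ha1b : (a1 | b)).
  { assert (a1 | g).
    { apply Z.gauss with w.
      - exists a2. rewrite <- Hw, Ea. ring.
      - apply Zgcd_1_rel_prime; auto. }
    apply Z.divide_trans with g; auto. exists b'. auto. }
  assert (Ha2d : (a2 | d)).
  { destruct (Z.eq_dec d 0) as [D0|D0]; [rewrite D0; apply Z.divide_0_r|].
    destruct (Z.eq_dec b 0) as [B0|B0].
    {
      assert (g = a) by (unfold g; rewrite B0; rewrite Z.gcd_0_r; lia).
      assert (w = 1) by nia. subst w.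
      rewrite Z.pow_1_l in Da2 by lia.
      apply Z.divide_trans with 1; auto. apply Z.divide_1_l. }
    set (h := Z.gcd b d).
    assert (Hh : 0 < h).
    { assert (0 <= h) by apply Z.gcd_nonneg.
      assert (h <> 0). { intro Z0. apply Z.gcd_eq_0 in Z0. lia. } lia. }
    destruct (Z.gcd_divide_l b d) as [be Hbe].
    destruct (Z.gcd_divide_r b d) as [de Hde].
    fold h in Hbe, Hde.
    assert (Rbd : rel_prime be de).
    { apply Zgcd_1_rel_prime.
      assert (E := Z.gcd_div_gcd b d h ltac:(lia) eq_refl).
      replace (b / h) with be in E by (rewrite Hbe at 1; rewrite Z.div_mul; lia).
      replace (d / h) with de in E by (rewrite Hde at 1; rewrite Z.div_mul; lia).
      exact E. }
    assert (HL : Z.lcm b d = Z.abs (b * de)).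
    { unfold Z.lcm. fold h. replace (d / h) with de; [reflexivity|]. rewrite Hde at 1. rewrite Z.div_mul; lia. }
    rewrite HL in Hdiv. apply (proj1 (Z.divide_abs_r _ _)) in Hdiv.
    assert (Hwde : (w | de)).
    { apply Z.gauss with b'.
      - destruct Hdiv as [q Hq].
        exists q. apply Z.mul_reg_l with g; [lia|].
        assert (g * w * q = b * de) by (rewrite Hq, Hw; ring).
        rewrite Hb' in H. nia.
      - apply Zgcd_1_rel_prime; auto. }
    assert (Rwbe : rel_prime w be).
    { apply (rel_prime_div de be w); auto. apply rel_prime_sym; auto. }
    assert (Ra2be : rel_prime a2 be).
    { apply (rel_prime_div (w ^ Z.of_nat k)); auto.
      apply rel_prime_sym, rp_pow, rel_prime_sym; auto. }
    apply Z.gauss with be.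
    - apply Z.divide_trans with a. { exists a1. lia. }
      apply Z.divide_trans with (b * de); auto.
      exists 1. rewrite Hbe, Hde. ring.
    - apply Zgcd_1_rel_prime; auto. }
  set (m1 := a1 * N1). set (m2 := a2 * N2).
  assert (Rm1w : rel_prime m1 w).
  { apply rel_prime_sym. apply rel_prime_mult; apply rel_prime_sym; auto. }
  assert (Dm2 : (m2 | w ^ Z.of_nat (k + k'))).
  { rewrite Nat2Z.inj_add, Z.pow_add_r by lia. apply mul_divide_mono; auto. }
  assert (R12 : rel_prime m1 m2).
  { apply rel_prime_sym. apply (rel_prime_div (w ^ Z.of_nat (k + k'))); auto.
    apply rel_prime_sym, rp_pow; auto. }
  destruct (rel_prime_bezout _ _ R12) as [u v Huv].
  assert (Hm1 : 0 < m1) by (unfold m1; nia).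
  assert (Hm2 : 0 < m2) by (unfold m2; nia).
  set (T := Z.abs X + Z.abs (u * m1)).
  exists (- u * m1 + m1 * m2 * T).
  assert (0 <= T) by (unfold T; lia).
  split; [|split].
  - assert (m1 * m2 * T >= T) by nia. unfold T in *. lia.
  - rewrite EN. apply mul_divide_mono.
    + exists (- u * a1 + a1 * m2 * T). unfold m1. ring.
    + exists (v * a2 + m1 * a2 * T). unfold m2 in *. lia.
  - rewrite Ea. apply coprime_mul_div.
    + apply rel_prime_sym. apply (rel_prime_div m2); [|exists N2; unfold m2; ring].
      apply rel_prime_sym. apply (rel_prime_div m1); auto. exists N1; unfold m1; ring.
    + apply Z.divide_sub_r; auto.
      apply Z.divide_mul_r. exists (- u * N1 + N1 * m2 * T). unfold m1. ring.
    + replace ((d - b) * (- u * m1 + m1 * m2 * T) - b)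
        with ((d - b) * (v * m2 + m1 * m2 * T) - d)
        by (replace (v * m2) with (1 - u * m1) by lia; ring).
      apply Z.divide_sub_r; auto.
      apply Z.divide_mul_r. exists (v * N2 + m1 * N2 * T). unfold m2. ring.
Qed.

Open Scope Z_scope.

Fixpoint prodZ (t : nat -> Z) (K : nat) : Z :=
  match K with O => 1 | S K' => prodZ t K' * t K' end.

Lemma prodZ_pos t K : (forall i, (i < K)%nat -> 1 <= t i) -> 1 <= prodZ t K.
Proof.
  induction K; simpl; intros H; [lia|].
  assert (1 <= prodZ t K) by (apply IHK; intros; apply H; lia).
  assert (1 <= t K) by (apply H; lia). nia.
Qed.

Lemma prodZ_div t K j : (j < K)%nat -> (t j | prodZ t K).
Proof.
  induction K; simpl; intros H; [lia|].
  destruct (Nat.eq_dec j K) as [->|E].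
  - apply Z.divide_factor_r.
  - apply Z.divide_mul_l. apply IHK. lia.
Qed.

Lemma tset (a : Z) : 0 < a -> forall K : nat, exists t : nat -> Z,
  (forall i, (i < K)%nat -> 1 <= t i) /\
  (forall i j, (i < j)%nat -> (j < K)%nat -> t i < t j /\ (a * (t j - t i) | t i)).
Proof.
  intros Ha K. induction K as [|K IH].
  - exists (fun _ => 1). split; intros; lia.
  - destruct IH as [t [Hpos Hpair]].
    set (L := a * prodZ t K).
    assert (HP : 1 <= prodZ t K) by (apply prodZ_pos; auto).
    assert (HL : 1 <= L) by (unfold L; nia).
    assert (HLdiv : forall i j, (i < j)%nat -> (j < K)%nat -> (a * (t j - t i) | L)).
    { intros i j Hij HjK. destruct (Hpair i j Hij HjK) as [_ Hd].
      unfold L. apply Z.mul_divide_mono_l.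
      apply Z.divide_trans with (t j); [|apply prodZ_div; auto].
      assert (H1 : (t j - t i | t i)).
      { apply Z.divide_trans with (a * (t j - t i)); auto. apply Z.divide_factor_r. }
      pose proof (Z.divide_add_r _ _ _ H1 (Z.divide_refl (t j - t i))) as H2.
      replace (t i + (t j - t i)) with (t j) in H2 by ring. exact H2. }
    exists (fun i => match i with O => L | S i' => L + t i' end).
    split.
    + intros [|i] Hi; [lia|]. assert (1 <= t i) by (apply Hpos; lia). lia.
    + intros [|i] [|j] Hij HjK; try lia.
      * split. { assert (1 <= t j) by (apply Hpos; lia). lia. }
        replace (L + t j - L) with (t j) by ring.
        unfold L. apply Z.mul_divide_mono_l. apply prodZ_div. lia.
      * destruct (Hpair i j ltac:(lia) ltac:(lia)) as [Hlt Hd].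
        split; [lia|].
        replace (L + t j - (L + t i)) with (t j - t i) by ring.
        apply Z.divide_add_r; auto. apply HLdiv; lia.
Qed.

Fixpoint all_lists {A} (U : list A) (L : nat) : list (list A) :=
  match L with
  | O => nil :: nil
  | S L' => flat_map (fun x => map (cons x) (all_lists U L')) U
  end.

Lemma length_fm {A} (U : list A) (l : list (list A)) :
  length (flat_map (fun x => map (cons x) l) U) = (length U * length l)%nat.
Proof.
  induction U; simpl; auto. rewrite length_app, length_map, IHU. lia.
Qed.

Lemma all_lists_length {A} (U : list A) L : length (all_lists U L) = (length U ^ L)%nat.
Proof.
  induction L; simpl; auto. rewrite length_fm, IHL. lia.
Qed.

Lemma all_lists_in {A} (U : list A) L (l : list A) :
  length l = L -> (forall x, In x l -> In x U) -> In l (all_lists U L).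
Proof.
  revert l. induction L; intros l Hl Hin.
  - destruct l; simpl in *; [auto|lia].
  - destruct l as [|x l]; simpl in *; [lia|].
    apply in_flat_map. exists x. split; [apply Hin; auto|].
    apply in_map. apply IHL; auto.
Qed.

Lemma pigeon {A} (U : list A) (L K : nat) (h : nat -> list A) :
  (forall i, (i < K)%nat -> length (h i) = L /\ forall x, In x (h i) -> In x U) ->
  (length U ^ L < K)%nat ->
  exists i j, (i < j)%nat /\ (j < K)%nat /\ h i = h j.
Proof.
  intros Hh HK.
  apply NNPP. intro Hno.
  assert (ND : NoDup (map h (seq 0 K))).
  { apply NoDup_map_NoDup_ForallPairs; [|apply seq_NoDup].
    intros x y Hx Hy Exy. apply in_seq in Hx, Hy.
    destruct (Nat.lt_trichotomy x y) as [H|[H|H]]; auto.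
    - exfalso. apply Hno. exists x, y. repeat split; auto; lia.
    - exfalso. apply Hno. exists y, x. repeat split; auto; lia. }
  assert (Inc : incl (map h (seq 0 K)) (all_lists U L)).
  { intros l Hl. apply in_map_iff in Hl. destruct Hl as [i [<- Hi]].
    apply in_seq in Hi. destruct (Hh i ltac:(lia)) as [H1 H2].
    apply all_lists_in; auto. }
  pose proof (NoDup_incl_length ND Inc) as Hle.
  rewrite length_map, length_seq, all_lists_length in Hle. lia.
Qed.

Close Scope Z_scope.
Open Scope R_scope.

Definition boxR (M : nat) (x : R) : nat := Z.to_nat (up ((x + 1) * INR M)).
Definition box (M : nat) (z : C) : nat * nat := (boxR M (fst z), boxR M (snd z)).

Lemma boxR_bound M x : -1 <= x <= 1 -> (boxR M x < 2 * M + 2)%nat.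
Proof.
  intros Hx. unfold boxR. destruct (archimed ((x + 1) * INR M)) as [H1 H2].
  assert (0 <= INR M) by apply pos_INR.
  assert (IZR (up ((x + 1) * INR M)) <= 2 * INR M + 1) by nra.
  assert (up ((x + 1) * INR M) < Z.of_nat (2 * M + 2))%Z.
  { apply lt_IZR. rewrite <- INR_IZR_INZ. rewrite plus_INR, mult_INR. simpl. lra. }
  lia.
Qed.

Lemma boxR_eq M x y : (0 < M)%nat -> -1 <= x -> -1 <= y -> boxR M x = boxR M y ->
  Rabs (x - y) < / INR M.
Proof.
  intros HM Hx Hy E. unfold boxR in E.
  assert (HMp : 0 < INR M) by (apply lt_0_INR; lia).
  destruct (archimed ((x + 1) * INR M)) as [H1 H2].
  destruct (archimed ((y + 1) * INR M)) as [H3 H4].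
  assert (0 < IZR (up ((x + 1) * INR M))) by nra.
  assert (0 < IZR (up ((y + 1) * INR M))) by nra.
  apply lt_IZR in H, H0.
  assert (E' : up ((x + 1) * INR M) = up ((y + 1) * INR M)) by lia.
  rewrite E' in H1, H2.
  assert (Rabs ((x - y) * INR M) < 1) by (apply Rabs_def1; nra).
  rewrite Rabs_mult, (Rabs_right (INR M)) in H5 by lra.
  apply Rmult_lt_reg_r with (INR M); auto.
  rewrite Rinv_l; lra.
Qed.

Lemma cmod_unit_bounds (z : C) : Cmod z = 1 -> -1 <= fst z <= 1 /\ -1 <= snd z <= 1.
Proof.
  intros H. pose proof (Rmax_Cmod z) as Hm. rewrite H in Hm.
  pose proof (Rmax_l (Rabs (fst z)) (Rabs (snd z))).
  pose proof (Rmax_r (Rabs (fst z)) (Rabs (snd z))).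
  split; [apply (proj1 (Rabs_le_between (fst z) 1))|apply (proj1 (Rabs_le_between (snd z) 1))]; lra.
Qed.

Lemma box_close M z w : (0 < M)%nat -> Cmod z = 1 -> Cmod w = 1 -> box M z = box M w ->
  Cmod (z - w)%C < 2 / INR M.
Proof.
  intros HM Hz Hw E. unfold box in E. injection E as E1 E2.
  destruct (cmod_unit_bounds z Hz) as [Hz1 Hz2].
  destruct (cmod_unit_bounds w Hw) as [Hw1 Hw2].
  pose proof (boxR_eq M (fst z) (fst w) HM ltac:(lra) ltac:(lra) E1) as B1.
  pose proof (boxR_eq M (snd z) (snd w) HM ltac:(lra) ltac:(lra) E2) as B2.
  pose proof (Cmod_2Rmax (z - w)) as Hc.
  assert (Hs : sqrt 2 * sqrt 2 = 2) by (apply sqrt_sqrt; lra).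
  pose proof Rlt_sqrt2_0.
  assert (sqrt 2 < 2) by nra.
  assert (Rmax (Rabs (fst (z - w)%C)) (Rabs (snd (z - w)%C)) < / INR M).
  { apply Rmax_lub_lt; simpl; auto. }
  assert (HMp : 0 < INR M) by (apply lt_0_INR; lia).
  assert (0 < / INR M) by (apply Rinv_0_lt_compat; auto).
  unfold Rdiv.
  assert (0 <= Rmax (Rabs (fst (z - w)%C)) (Rabs (snd (z - w)%C))).
  { eapply Rle_trans; [apply Rabs_pos|apply Rmax_l]. }
  nra.
Qed.

Lemma cplx (p q dl ee x1 x2 y1 y2 : C) :
  Cmod dl = 1 -> Cmod ee = 1 -> Cmod x2 = 1 -> Cmod y2 = 1 ->
  (p * dl = ee * x1 * y2)%C -> (q * dl = ee * x2 * y1)%C ->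
  Cmod (p - q) <= Cmod (x1 - x2) + Cmod (y2 - y1).
Proof.
  intros Hd He Hx Hy E1 E2.
  assert (E : ((p - q) * dl = ee * ((x1 - x2) * y2 + x2 * (y2 - y1)))%C).
  { replace ((p - q) * dl)%C with (p * dl - q * dl)%C by ring.
    rewrite E1, E2. ring. }
  assert (Cmod (p - q) = Cmod ((p - q) * dl)) by (rewrite Cmod_mult, Hd; ring).
  rewrite H, E, Cmod_mult, He, Rmult_1_l.
  eapply Rle_trans; [apply Cmod_triangle|].
  rewrite !Cmod_mult, Hx, Hy. lra.
Qed.

Lemma fold_max_lt (l : list R) eps : 0 < eps -> (forall x, In x l -> x < eps) ->
  fold_right Rmax 0 l < eps.
Proof.
  induction l; simpl; intros He H; auto.
  apply Rmax_lub_lt; auto.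
Qed.

Lemma fold_max_ge (l : list R) : 0 <= fold_right Rmax 0 l.
Proof.
  induction l; simpl; [lra|]. eapply Rle_trans; [exact IHl|apply Rmax_r].
Qed.

Open Scope R_scope.

Lemma map_seq_eq {A} (g g' : nat -> A) n m c :
  map g (seq m n) = map g' (seq m n) -> (m <= c < m + n)%nat -> g c = g' c.
Proof.
  revert m. induction n; intros m E Hc; simpl in *; [lia|].
  injection E as E1 E2. destruct (Nat.eq_dec c m) as [->|Ne]; auto.
  apply (IHn (S m)); auto. lia.
Qed.

Lemma z2n3 (x y z : Z) : (0 <= x)%Z -> (0 <= y)%Z -> (0 <= z)%Z ->
  Z.to_nat (x * y * (z + 1)) = (Z.to_nat x * Z.to_nat y * S (Z.to_nat z))%nat.
Proof.
  intros. rewrite !Z2Nat.inj_mul by nia. rewrite Z2Nat.inj_add by lia. simpl. lia.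
Qed.

Lemma one_le_mul (x y : nat) : (1 <= x)%nat -> (1 <= y)%nat -> (1 <= x * y)%nat.
Proof. intros. nia. Qed.

Lemma core_pos (r a : nat) (b d : Z) (ha : (1 <= a)%nat)
  (hdiv : Z.divide (Z.of_nat a) (Z.lcm b d))
  (f : nat -> nat -> C)
  (hS : forall j, (j < r)%nat -> circle_valued (f j))
  (hcm : forall j, (j < r)%nat -> completely_multiplicative (f j))
  (hbd : (b < d)%Z) (eps : R) (Heps : 0 < eps) (N0 : nat) :
  exists n, (N0 <= n)%nat /\ forall j, (j < r)%nat ->
    Cmod (f j (lin_arg a n b) - f j (lin_arg a n d))%C < eps.
Proof.
  set (M := S (Z.to_nat (up (4 / eps)))).
  assert (HM0 : (0 < M)%nat) by (unfold M; lia).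
  assert (HM : 2 / INR M < eps / 2).
  { destruct (archimed (4 / eps)) as [H1 _].
    assert (0 < 4 / eps) by (apply Rdiv_lt_0_compat; lra).
    assert (0 < up (4 / eps))%Z by (apply lt_IZR; lra).
    assert (INR M = IZR (up (4 / eps)) + 1).
    { unfold M. rewrite S_INR, INR_IZR_INZ, Z2Nat.id by lia. reflexivity. }
    assert (HMp : 4 / eps < INR M) by lra.
    assert (0 < INR M) by lra.
    assert (H4 : 4 < eps * INR M).
    { unfold Rdiv in HMp. apply Rmult_lt_compat_l with (r := eps) in HMp; auto.
      rewrite <- Rmult_assoc, (Rmult_comm eps 4), Rmult_assoc, Rinv_r in HMp by lra. lra. }
    apply Rmult_lt_reg_r with (INR M); auto.
    unfold Rdiv. rewrite Rmult_assoc, Rinv_l by lra. lra. }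
  set (Sq := seq 0 (2 * M + 2)).
  set (U := list_prod (list_prod Sq Sq) (list_prod Sq Sq)).
  set (K := S (length U ^ r)).
  assert (Ha : (0 < Z.of_nat a)%Z) by lia.
  destruct (tset (Z.of_nat a) Ha K) as [t [Hpos Hpair]].
  set (NN := prodZ t K).
  assert (HNN : (1 <= NN)%Z) by (apply prodZ_pos; auto).
  destruct (arith (Z.of_nat a) b d NN (Z.of_nat a * Z.of_nat N0 + Z.abs b + 1) Ha
              ltac:(lia) hdiv) as [s [Hs [HsN Hsa]]].
  set (Bn := fun k => Z.to_nat (t k + s)).
  set (h := fun k => map (fun c => (box M (f c (Bn k)), box M (f c (S (Bn k))))) (seq 0 r)).
  assert (HBn : forall k, (k < K)%nat -> (1 <= Bn k)%nat).
  { intros k Hk. unfold Bn. assert (1 <= t k)%Z by (apply Hpos; auto). lia. }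
  assert (Hboxin : forall z, Cmod z = 1 -> In (box M z) (list_prod Sq Sq)).
  { intros z Hz. destruct (cmod_unit_bounds z Hz) as [H1 H2].
    unfold box. apply in_prod; unfold Sq; apply in_seq; split; try lia;
    apply boxR_bound; auto. }
  destruct (pigeon U r K h) as (i & j & Hij & HjK & Eh).
  { intros k Hk. split.
    - unfold h. rewrite length_map, length_seq. reflexivity.
    - intros x Hx. unfold h in Hx. apply in_map_iff in Hx.
      destruct Hx as [c [<- Hc]]. apply in_seq in Hc.
      unfold U. apply in_prod; apply Hboxin; apply (hS c); try lia.
      all: specialize (HBn k Hk); lia. }
  { unfold K. lia. }
  assert (Hbox : forall c, (c < r)%nat ->
     box M (f c (Bn i)) = box M (f c (Bn j)) /\
     box M (f c (S (Bn i))) = box M (f c (S (Bn j)))).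
  { intros c Hc.
    assert (E := map_seq_eq _ _ r 0 c Eh ltac:(lia)). cbv beta in E.
    injection E as E1 E2 H H0.
    unfold box; rewrite E1, E2, H, H0; split; reflexivity. }
  destruct (Hpair i j Hij HjK) as [Htij Hd].
  set (Dl := (t j - t i)%Z).
  set (Bi := (t i + s)%Z). set (Bj := (t j + s)%Z).
  assert (Hti : (1 <= t i)%Z) by (apply Hpos; lia).
  assert (Htj : (1 <= t j)%Z) by (apply Hpos; lia).
  assert (Hs0 : (1 <= s)%Z) by lia.
  assert (Hdiv2 : (Z.of_nat a * Dl | Bi * (Bi + 1))%Z).
  { replace (Bi * (Bi + 1))%Z with (t i * (t i + 2 * s + 1) + s * (s + 1))%Z
      by (unfold Bi; ring).
    apply Z.divide_add_r.
    - apply Z.divide_mul_l. exact Hd.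
    - apply Z.divide_trans with (t i); auto.
      apply Z.divide_trans with NN; auto. apply prodZ_div. lia. }
  destruct Hdiv2 as [k Hk].
  assert (Hk0 : (0 <= k)%Z).
  { assert (0 < Bi * (Bi + 1))%Z by (unfold Bi; nia).
    assert (0 < Z.of_nat a * Dl)%Z by (unfold Dl; nia). nia. }
  set (e := (d - b)%Z).
  set (P := (e * (Z.of_nat a * k + Bi))%Z).
  assert (He : (1 <= e)%Z) by (unfold e; lia).
  assert (0 <= Z.of_nat a * k)%Z by nia.
  assert (HP : (Bi <= P)%Z) by (unfold P; assert (1 <= Bi)%Z by (unfold Bi; lia); nia).
  assert (Hpb : (Z.of_nat a | P - b)%Z).
  { replace (P - b)%Z with (e * Z.of_nat a * k + e * t i + (e * s - b))%Z
      by (unfold P, Bi; ring).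
    apply Z.divide_add_r; [apply Z.divide_add_r|].
    - apply Z.divide_mul_l. apply Z.divide_factor_r.
    - apply Z.divide_mul_r. apply Z.divide_trans with (Z.of_nat a * Dl)%Z; auto.
      apply Z.divide_factor_l.
    - exact Hsa. }
  destruct Hpb as [q Hq].
  assert (Hq0 : (Z.of_nat N0 <= q)%Z).
  { assert (q * Z.of_nat a >= Z.of_nat a * Z.of_nat N0 + 1)%Z by (unfold Bi in *; lia).
    nia. }
  exists (Z.to_nat q). split; [lia|].
  intros c Hc.
  assert (L1 : lin_arg a (Z.to_nat q) b = Z.to_nat P).
  { unfold lin_arg. f_equal. rewrite Z2Nat.id by lia. lia. }
  assert (L2 : lin_arg a (Z.to_nat q) d = Z.to_nat (P + e)).
  { unfold lin_arg. f_equal. rewrite Z2Nat.id by lia. unfold e. lia. }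
  rewrite L1, L2.
  assert (I1 : (P * Dl = e * Bi * (Bj + 1))%Z).
  { assert (HH : (P * Dl = e * (k * (Z.of_nat a * Dl)) + e * Bi * Dl)%Z) by (unfold P; ring).
    rewrite HH, <- Hk. unfold Bj, Bi, Dl. ring. }
  assert (I2 : ((P + e) * Dl = e * Bj * (Bi + 1))%Z).
  { assert (HH : ((P + e) * Dl = e * (k * (Z.of_nat a * Dl)) + e * Bi * Dl + e * Dl)%Z) by (unfold P; ring).
    rewrite HH, <- Hk. unfold Bj, Bi, Dl. ring. }
  assert (HDl : (1 <= Dl)%Z) by (unfold Dl; lia).
  assert (N1 : (Z.to_nat P * Z.to_nat Dl = Z.to_nat e * Bn i * S (Bn j))%nat).
  { rewrite <- Z2Nat.inj_mul by lia. rewrite I1.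
    unfold Bn. fold Bi Bj.
    apply z2n3; unfold Bi, Bj; lia. }
  assert (N2 : (Z.to_nat (P + e) * Z.to_nat Dl = Z.to_nat e * Bn j * S (Bn i))%nat).
  { rewrite <- Z2Nat.inj_mul by lia. rewrite I2.
    unfold Bn. fold Bi Bj.
    apply z2n3; unfold Bi, Bj; lia. }
  assert (HBi : (1 <= Bn i)%nat) by (apply HBn; lia).
  assert (HBj : (1 <= Bn j)%nat) by (apply HBn; lia).
  pose proof (hS c Hc) as Sc. pose proof (hcm c Hc) as Mc.
  unfold circle_valued in Sc. unfold completely_multiplicative in Mc.
  assert (C1 : (f c (Z.to_nat P) * f c (Z.to_nat Dl) = f c (Z.to_nat e) * f c (Bn i) * f c (S (Bn j)))%C).
  { rewrite <- Mc by lia. rewrite N1. rewrite Mc by (try apply one_le_mul; lia). rewrite Mc by lia. reflexivity. }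
  assert (C2 : (f c (Z.to_nat (P + e)) * f c (Z.to_nat Dl) = f c (Z.to_nat e) * f c (Bn j) * f c (S (Bn i)))%C).
  { rewrite <- Mc by lia. rewrite N2. rewrite Mc by (try apply one_le_mul; lia). rewrite Mc by lia. reflexivity. }
  destruct (Hbox c Hc) as [E1 E2].
  pose proof (box_close M _ _ HM0 (Sc _ HBi) (Sc _ HBj) E1) as Cl1.
  pose proof (box_close M _ _ HM0 (Sc (S (Bn j)) ltac:(lia)) (Sc (S (Bn i)) ltac:(lia)) (eq_sym E2)) as Cl2.
  pose proof (cplx _ _ _ _ _ _ _ _ (Sc (Z.to_nat Dl) ltac:(lia)) (Sc (Z.to_nat e) ltac:(lia)) (Sc _ HBj) (Sc (S (Bn j)) ltac:(lia)) C1 C2) as Hc2.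
  lra.
Qed.

Lemma core_all (r a : nat) (b d : Z) (ha : (1 <= a)%nat)
  (hdiv : Z.divide (Z.of_nat a) (Z.lcm b d))
  (f : nat -> nat -> C)
  (hS : forall j, (j < r)%nat -> circle_valued (f j))
  (hcm : forall j, (j < r)%nat -> completely_multiplicative (f j))
  (eps : R) (Heps : 0 < eps) (N0 : nat) :
  exists n, (N0 <= n)%nat /\ forall j, (j < r)%nat ->
    Cmod (f j (lin_arg a n b) - f j (lin_arg a n d))%C < eps.
Proof.
  destruct (Z.lt_trichotomy b d) as [H|[H|H]].
  - apply core_pos; auto.
  - subst d. exists N0. split; [lia|]. intros j _.
    replace (f j (lin_arg a N0 b) - f j (lin_arg a N0 b))%C with (RtoC 0) by ring.
    rewrite Cmod_0. lra.
  - rewrite Z.lcm_comm in hdiv.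
    destruct (core_pos r a d b ha hdiv f hS hcm H eps Heps N0) as [n [Hn Hj]].
    exists n. split; auto. intros j Hjr.
    rewrite <- Cmod_opp.
    replace (- (f j (lin_arg a n b) - f j (lin_arg a n d)))%C
      with (f j (lin_arg a n d) - f j (lin_arg a n b))%C by ring.
    apply Hj; auto.
Qed.

Theorem corollary1p3 (r a : nat) (b d : Z)
  (hr : (1 <= r)%nat) (ha : (1 <= a)%nat)
  (hdiv : Z.divide (Z.of_nat a) (Z.lcm b d))
  (f : nat -> nat -> C)
  (hS : forall j, (j < r)%nat -> circle_valued (f j))
  (hcm : forall j, (j < r)%nat -> completely_multiplicative (f j)) :
  LimInf_seq (fun n : nat =>
     max_upto r (fun j => Cmod (f j (lin_arg a n b) - f j (lin_arg a n d))%C))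
  = Finite 0.
Proof.
  apply is_LimInf_seq_unique. simpl. intros eps. split.
  - intros N0.
    destruct (core_all r a b d ha hdiv f hS hcm eps (cond_pos eps) N0) as [n [Hn Hj]].
    exists n. split; auto. rewrite Rplus_0_l.
    unfold max_upto. apply fold_max_lt; [apply cond_pos|].
    intros x Hx. apply in_map_iff in Hx. destruct Hx as [j [<- Hjin]].
    apply in_seq in Hjin. apply Hj. lia.
  - exists 0%nat. intros n _. unfold max_upto.
    pose proof (fold_max_ge (map (fun j => Cmod (f j (lin_arg a n b) - f j (lin_arg a n d))%C) (seq 0 r))).
    pose proof (cond_pos eps). lra.
Qed.
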